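(* Let $N>0$ and $\tau\in(0,1)$. Then: (i) The following are equivalent: $\beta_1^{**}(\tau)=4(N+1)$; [$\underline\beta_1(\tau)=4(N+1)$ and $\beta_2^*(\tau)=\overline\beta_2(\tau)$]; $\tau=\tau_0^{(1)}$. In particular $\beta_1^{**}(\tau)-\tau\beta_2^*(\tau)=2(N+1)$ if and only if $\tau=\tau_0^{(1)}$. (ii) The following are equivalent: $\beta_2^{**}(\tau)=4$; [$\underline\beta_2(\tau)=4$ and $\beta_1^*(\tau)=\overline\beta_1(\tau)$]; $\tau=\tau_0^{(2)}$. In particular $\beta_2^{**}(\tau)-\tau\beta_1^*(\tau)=2$ if and only if $\tau=\tau_0^{(2)}$. Moreover $0<\tau_0^{(2)}<\tau_0^{(1)}<\frac12$.
   Context: With $D=(N+1)^2+2\tau(N+1)+1$: $$\underline\beta_1(\tau)=\tfrac{2}{1-\tau^2}(N+1+\tau+\tau\sqrt D),\qquad \overline\beta_1(\tau)=\tfrac{2}{1-\tau^2}(N+1+\tau+\sqrt D),$$ $$\underline\beta_2(\tau)=\tfrac{2}{1-\tau^2}(1+\tau(N+1)+\tau\sqrt D),\qquad \overline\beta_2(\tau)=\tfrac{2}{1-\tau^2}(1+\tau(N+1)+\sqrt D);$$ $$\beta_1^*(\tau)=4(N+1)+8\tau,\quad \beta_2^*(\tau)=4+8\tau(N+1),\quad \beta_1^{**}(\tau)=2\tau\beta_2^*(\tau)=8\tau(1+2\tau(N+1)),\quad \beta_2^{**}(\tau)=2\tau\beta_1^*(\tau)=8\tau(N+1+2\tau);$$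 $$\tau_0^{(1)}=\frac{N+1}{1+\sqrt{1+4(N+1)^2}},\qquad \tau_0^{(2)}=\frac{1}{N+1+\sqrt{(N+1)^2+4}}.$$ *)

(* Defs.v *)
From HB Require Import structures.
From mathcomp Require Import all_boot all_order all_algebra.
From mathcomp Require Import reals.
Set Implicit Arguments. Unset Strict Implicit. Unset Printing Implicit Defensive.
Import Order.TTheory GRing.Theory Num.Theory.
Local Open Scope ring_scope.

Section Betas.
Variables (R : realType) (N : nat).
Let n1 : R := (N.+1)%:R.

Definition Dd (tau : R) : R := n1 ^+ 2 + 2 * tau * n1 + 1.

Definition beta1_low (tau : R) : R :=
  2 / (1 - tau ^+ 2) * (n1 + tau + tau * Num.sqrt (Dd tau)).
Definition beta1_up (tau : R) : R :=
  2 / (1 - tau ^+ 2) * (n1 + tau + Num.sqrt (Dd tau)).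
Definition beta2_low (tau : R) : R :=
  2 / (1 - tau ^+ 2) * (1 + tau * n1 + tau * Num.sqrt (Dd tau)).
Definition beta2_up (tau : R) : R :=
  2 / (1 - tau ^+ 2) * (1 + tau * n1 + Num.sqrt (Dd tau)).

Definition beta1_star (tau : R) : R := 4 * n1 + 8 * tau.
Definition beta2_star (tau : R) : R := 4 + 8 * tau * n1.
Definition beta1_sstar (tau : R) : R := 2 * tau * beta2_star tau.
Definition beta2_sstar (tau : R) : R := 2 * tau * beta1_star tau.

Definition tau01 : R := n1 / (1 + Num.sqrt (1 + 4 * n1 ^+ 2)).
Definition tau02 : R := 1 / (n1 + Num.sqrt (n1 ^+ 2 + 4)).
End Betas.

(* Main.v *)
Require Import Defs.
From HB Require Import structures.
From mathcomp Require Import all_boot all_order all_algebra.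
From mathcomp Require Import reals.
From mathcomp Require Import ring lra.
Import Order.TTheory GRing.Theory Num.Theory.
Local Open Scope ring_scope.

Lemma sq_eq (R : realType) (a b : R) : 0 <= a -> 0 <= b -> a ^+ 2 = b ^+ 2 -> a = b.
Proof. move=> ha hb h; apply/eqP; rewrite -(eqrXn2 (n:=2)) //; exact/eqP. Qed.

Lemma divform (R : realType) (k X Y : R) : k != 0 -> (2 / k * X = Y <-> 2 * X = Y * k).
Proof.
move=> hk; split => [<-|H]; first by field.
by rewrite -[Y](mulfK hk) -H; field.
Qed.

Lemma divform' (R : realType) (k X Y : R) : k != 0 -> (Y = 2 / k * X <-> 2 * X = Y * k).
Proof. move=> hk; rewrite -divform //; split=> ->//. Qed.

Lemma keyQ (R : realType) (m r t : R) : 0 < m -> 0 <= r -> r ^+ 2 = 1 + 4 * m ^+ 2 -> 0 < t ->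
  (4 * m * t ^+ 2 + 2 * t - m = 0 <-> t = m / (1 + r)).
Proof.
move=> hm hr hr2 ht.
have h1r : 1 + r != 0 by rewrite gt_eqF // ltr_pwDl.
have E : t = m / (1 + r) <-> t * (1 + r) = m.
  by split => [->|<-]; field.
rewrite E; split => H.
- have hr' : r = 4 * m * t + 1.
    apply: sq_eq => //; first by nra.
    rewrite hr2; have -> : (4 * m * t + 1) ^+ 2 = 4 * m * (4 * m * t ^+ 2 + 2 * t - m) + 1 + 4 * m ^+ 2 by ring.
    by rewrite H; ring.
  by rewrite hr'; lra.
- set a := 4 * m * t + 1 - r.
  have hQ : 4 * m * t ^+ 2 + 2 * t - m = t * a.
    by rewrite /a; lra.
  have : a * (1 + r) = 0.
    have -> : a * (1 + r) = a * (4 * m * t + 1 + r) - 4 * m * (t * a) by rewrite /a; ring.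
    rewrite -hQ; have -> : a * (4 * m * t + 1 + r) = (4 * m * t + 1) ^+ 2 - r ^+ 2 by rewrite /a; ring.
    by rewrite hr2; ring.
  move/eqP; rewrite mulf_eq0 (negbTE h1r) orbF => /eqP ha.
  by rewrite hQ ha mulr0.
Qed.

Lemma keyP (R : realType) (m r t : R) : 0 < m -> 0 <= r -> r ^+ 2 = m ^+ 2 + 4 -> 0 < t ->
  (4 * t ^+ 2 + 2 * m * t - 1 = 0 <-> t = 1 / (m + r)).
Proof.
move=> hm hr hr2 ht.
have h1r : m + r != 0 by rewrite gt_eqF // ltr_pwDl.
have E : t = 1 / (m + r) <-> t * (m + r) = 1.
  by split => [->|<-]; field.
rewrite E; split => H.
- have hr' : r = 4 * t + m.
    apply: sq_eq => //; first by nra.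
    rewrite hr2; have -> : (4 * t + m) ^+ 2 = 4 * (4 * t ^+ 2 + 2 * m * t - 1) + m ^+ 2 + 4 by ring.
    by rewrite H; ring.
  by rewrite hr'; lra.
- set a := 4 * t + m - r.
  have hQ : 4 * t ^+ 2 + 2 * m * t - 1 = t * a.
    by rewrite /a; lra.
  have : a * (m + r) = 0.
    have -> : a * (m + r) = a * (4 * t + m + r) - 4 * (t * a) by rewrite /a; ring.
    rewrite -hQ; have -> : a * (4 * t + m + r) = (4 * t + m) ^+ 2 - r ^+ 2 by rewrite /a; ring.
    by rewrite hr2; ring.
  move/eqP; rewrite mulf_eq0 (negbTE h1r) orbF => /eqP ha.
  by rewrite hQ ha mulr0.
Qed.

Lemma lt_half (R : realType) (m r t : R) : 0 < m -> 0 <= r -> r ^+ 2 = 1 + 4 * m ^+ 2 ->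
  t * (1 + r) = m -> t < 1 / 2.
Proof.
move=> hm hr hr2 E.
have hh : 0 < 2 * m + r by lra.
have hr1m : 2 * m < r.
  rewrite ltNge; apply/negP => H.
  have : 0 <= (2 * m - r) * (2 * m + r) by apply: mulr_ge0; lra.
  have -> : (2 * m - r) * (2 * m + r) = -1 by rewrite (_ : (2 * m - r) * (2 * m + r) = 4 * m ^+ 2 - r ^+ 2); [rewrite hr2; ring|ring].
  lra.
have h2 : 2 * t * (1 + r) < 1 + r by rewrite -mulrA E; lra.
have h1r : 0 < 1 + r by lra.
have : 2 * t < 1 by rewrite -(ltr_pM2r h1r) mul1r.
lra.
Qed.

Lemma lt21 (R : realType) (m t1 t2 : R) : 1 < m -> 0 < t1 -> 0 < t2 ->
  4 * m * t1 ^+ 2 + 2 * t1 - m = 0 -> 4 * t2 ^+ 2 + 2 * m * t2 - 1 = 0 -> t2 < t1.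
Proof.
move=> hm h1 h2 Q1 P2.
have hP1 : 0 < 4 * t1 ^+ 2 + 2 * m * t1 - 1.
  have e : m * (4 * t1 ^+ 2 + 2 * m * t1 - 1) = 2 * t1 * (m ^+ 2 - 1) + (4 * m * t1 ^+ 2 + 2 * t1 - m) by ring.
  have : 0 < m * (4 * t1 ^+ 2 + 2 * m * t1 - 1).
    rewrite e Q1 addr0; apply: mulr_gt0; first lra.
    rewrite subr_gt0; nra.
  by rewrite pmulr_rgt0 //; lra.
have e : (4 * t1 ^+ 2 + 2 * m * t1 - 1) - (4 * t2 ^+ 2 + 2 * m * t2 - 1) = (t1 - t2) * (4 * (t1 + t2) + 2 * m) by ring.
have : 0 < (t1 - t2) * (4 * (t1 + t2) + 2 * m) by rewrite -e P2 subr0.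
rewrite pmulr_lgt0; last lra.
by rewrite subr_gt0.
Qed.

Lemma lin (R : realType) (x y Q c : R) : c != 0 -> x - y = c * Q -> (x = y <-> Q = 0).
Proof.
move=> hc e; split => H.
- by move: e; rewrite H subrr => /esym/eqP; rewrite mulf_eq0 (negbTE hc) /= => /eqP.
- by apply/eqP; rewrite -subr_eq0 e H mulr0.
Qed.

Theorem mainTheorem12 (R : realType) (N : nat) (tau : R) :
  (0 < N)%N -> 0 < tau < 1 ->
  (* (i) *)
  ((beta1_sstar N tau = 4 * (N.+1)%:R <->
      (beta1_low N tau = 4 * (N.+1)%:R /\ beta2_star N tau = beta2_up N tau)) /\
   ((beta1_low N tau = 4 * (N.+1)%:R /\ beta2_star N tau = beta2_up N tau) <->
      tau = tau01 R N) /\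
   (beta1_sstar N tau - tau * beta2_star N tau = 2 * (N.+1)%:R <-> tau = tau01 R N)) /\
  (* (ii) *)
  ((beta2_sstar N tau = 4 <->
      (beta2_low N tau = 4 /\ beta1_star N tau = beta1_up N tau)) /\
   ((beta2_low N tau = 4 /\ beta1_star N tau = beta1_up N tau) <->
      tau = tau02 R N) /\
   (beta2_sstar N tau - tau * beta1_star N tau = 2 <-> tau = tau02 R N)) /\
  (* moreover *)
  (0 < tau02 R N /\ tau02 R N < tau01 R N /\ tau01 R N < 1 / 2).
Proof.
move=> hN /andP[ht0 ht1].
rewrite /beta1_sstar /beta2_sstar /beta1_low /beta2_low /beta1_up /beta2_up
  /beta1_star /beta2_star /tau01 /tau02 /Dd.
set m : R := (N.+1)%:R.
have hm2 : 2 <= m by rewrite /m -(natr1 N) -[2]/(1+1) lerD2r ler1n.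
have hm : 0 < m by lra.
set s := Num.sqrt _.
have hs0 : 0 <= s by exact: sqrtr_ge0.
have hs2 : s ^+ 2 = m ^+ 2 + 2 * tau * m + 1.
  by rewrite sqr_sqrtr //; nra.
set r1 := Num.sqrt (1 + 4 * m ^+ 2).
have hr1 : 0 <= r1 by exact: sqrtr_ge0.
have hr12 : r1 ^+ 2 = 1 + 4 * m ^+ 2 by rewrite sqr_sqrtr //; nra.
set r2 := Num.sqrt (m ^+ 2 + 4).
have hr2 : 0 <= r2 by exact: sqrtr_ge0.
have hr22 : r2 ^+ 2 = m ^+ 2 + 4 by rewrite sqr_sqrtr //; nra.
have hk : 1 - tau ^+ 2 != 0 by apply/eqP; nra.
have htau : tau != 0 by rewrite gt_eqF.
have ht2 : tau ^+ 2 - 1 != 0 by apply/eqP; nra.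
set Q := 4 * m * tau ^+ 2 + 2 * tau - m.
set P := 4 * tau ^+ 2 + 2 * m * tau - 1.
have KQ := @keyQ R m r1 tau hm hr1 hr12 ht0.
have KP := @keyP R m r2 tau hm hr2 hr22 ht0.
have B1 : (2 / (1 - tau ^+ 2) * (m + tau + tau * s) = 4 * m /\
           4 + 8 * tau * m = 2 / (1 - tau ^+ 2) * (1 + tau * m + s)) <-> Q = 0.
  rewrite divform // divform' //; split.
  - move=> [E1 E2].
    have E3 := congr1 (fun x => tau * x) E2.
    have : Q * (tau ^+ 2 - 1) = 0 by rewrite /Q /=; simpl in E3; lra.
    by move/eqP; rewrite mulf_eq0 (negbTE ht2) orbF => /eqP.
  - move=> hQ.
    have hts : 2 * tau * s = m.
      apply: sq_eq; [nra|lra|].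
      have -> : (2 * tau * s) ^+ 2 = 4 * tau ^+ 2 * s ^+ 2 by ring.
      rewrite hs2.
      apply/eqP; rewrite -subr_eq0; apply/eqP.
      by transitivity (Q * (m + 2 * tau)); [rewrite /Q; ring | rewrite hQ mul0r].
    split; first by rewrite /Q in hQ; lra.
    apply: (mulfI htau).
    apply/eqP; rewrite -subr_eq0; apply/eqP.
    have -> : tau * (2 * (1 + tau * m + s)) - tau * ((4 + 8 * tau * m) * (1 - tau ^+ 2))
       = (2 * tau * s - m) + Q * (2 * tau ^+ 2 - 1) by rewrite /Q; ring.
    by rewrite hts hQ; ring.
have B2 : (2 / (1 - tau ^+ 2) * (1 + tau * m + tau * s) = 4 /\
           4 * m + 8 * tau = 2 / (1 - tau ^+ 2) * (m + tau + s)) <-> P = 0.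
  rewrite divform // divform' //; split.
  - move=> [E1 E2].
    have E3 := congr1 (fun x => tau * x) E2.
    have : P * (tau ^+ 2 - 1) = 0 by rewrite /P /=; simpl in E3; lra.
    by move/eqP; rewrite mulf_eq0 (negbTE ht2) orbF => /eqP.
  - move=> hP.
    have hts : 2 * tau * s = 1.
      apply: sq_eq; [nra|lra|].
      have -> : (2 * tau * s) ^+ 2 = 4 * tau ^+ 2 * s ^+ 2 by ring.
      rewrite hs2.
      apply/eqP; rewrite -subr_eq0; apply/eqP.
      by transitivity (P * (1 + 2 * tau * m)); [rewrite /P; ring | rewrite hP mul0r].
    split; first by rewrite /P in hP; lra.
    apply: (mulfI htau).
    apply/eqP; rewrite -subr_eq0; apply/eqP.
    have -> : tau * (2 * (m + tau + s)) - tau * ((4 * m + 8 * tau) * (1 - tau ^+ 2))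
       = (2 * tau * s - 1) + P * (2 * tau ^+ 2 - 1) by rewrite /P; ring.
    by rewrite hts hP; ring.
have h4 : (4 : R) != 0 by rewrite pnatr_eq0.
have h2 : (2 : R) != 0 by rewrite pnatr_eq0.
have A1 : 2 * tau * (4 + 8 * tau * m) = 4 * m <-> Q = 0 by apply: (@lin R _ _ _ _ h4); rewrite /Q; ring.
have C1 : 2 * tau * (4 + 8 * tau * m) - tau * (4 + 8 * tau * m) = 2 * m <-> Q = 0
  by apply: (@lin R _ _ _ _ h2); rewrite /Q; ring.
have A2 : 2 * tau * (4 * m + 8 * tau) = 4 <-> P = 0 by apply: (@lin R _ _ _ _ h4); rewrite /P; ring.
have C2 : 2 * tau * (4 * m + 8 * tau) - tau * (4 * m + 8 * tau) = 2 <-> P = 0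
  by apply: (@lin R _ _ _ _ h2); rewrite /P; ring.
set t1 := m / (1 + r1).
set t2 := 1 / (m + r2).
have ht1p : 0 < t1 by rewrite divr_gt0 // ltr_pwDl.
have ht2p : 0 < t2 by rewrite divr_gt0 // ltr_pwDl.
have Q1 : 4 * m * t1 ^+ 2 + 2 * t1 - m = 0 by apply/(@keyQ R m r1 t1 hm hr1 hr12 ht1p).
have P2 : 4 * t2 ^+ 2 + 2 * m * t2 - 1 = 0 by apply/(@keyP R m r2 t2 hm hr2 hr22 ht2p).
have lt1 : t1 < 1 / 2.
  apply: (@lt_half R m r1 t1 hm hr1 hr12).
  by rewrite /t1; field; rewrite gt_eqF // ltr_pwDl.
have lt21 : t2 < t1.
  apply: (@lt21 R m t1 t2) => //; lra.
split; [split; [|split]|split; [split; [|split]|]].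
- exact: (iff_trans A1 (iff_sym B1)).
- exact: (iff_trans B1 KQ).
- exact: (iff_trans C1 KQ).
- exact: (iff_trans A2 (iff_sym B2)).
- exact: (iff_trans B2 KP).
- exact: (iff_trans C2 KP).
- by split; [exact: ht2p | split].
Qed.
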